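(* Let $\alpha<\omega_1$, $K\ge1$, $X\subseteq W$ a block subspace and $(z_n)$ a block sequence in $W$ such that II has a strategy in $G^\alpha_X$ to play $(y_0,\dots,y_k)$ satisfying $(y_0,\dots,y_k)\sim_K(z_0,\dots,z_k)$. Then for every block subspace $Y\subseteq X$, ${\rm rank}\big(T((z_n),Y,K)\big)>\alpha$.
   Context: Let $\mathcal W$ be a real Banach space with Schauder basis $(e_n)$. Fix a countable subfield $\mathfrak F\subseteq\mathbb R$ such that $\|\sum_{n\le m}a_ne_n\|\in\mathfrak F$ whenever all $a_n\in\mathfrak F$, and let $W$ be the $\mathfrak F$-vector space of finite $\mathfrak F$-linear combinations of the $e_n$, with the norm of $\mathcal W$; subspaces are $\mathfrak F$-linear in $W$. For nonzero $x=\sum a_ne_n$, ${\rm supp}(x)=\{n:a_n\neq0\}$, and $x<y$ means $\max{\rm supp}(x)<\min{\rm supp}(y)$. A block sequence is a sequence of nonzero vectors $x_0<x_1<\dots$; a block subspace is the span of an infinite block sequence. $(x_i)_{i\le k}\sim_K(y_i)_{i\le k}$ means $\frac1K\|\sum a_ix_i\|\le\|\sum a_iy_i\|\le K\|\sum a_ix_i\|$ for all real $a_i$. $T((z_n),Y,K)$ is the tree of all finite sequences $(y_0,\dots,y_k)$ of vectors of $Y$, including the empty one, with $(y_0,\dots,y_k)\sim_K(z_0,\dots,z_k)$. For a well-founded tree $T$, $\rho_T(s)=\sup\{\rho_T(t)+1:s\prec t\in T\}$ ($0$ at terminal nodes) and ${\rm rank}(T)=\sup\{\rho_T(s)+1:s\in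 T\}$; ill-founded trees have rank $\infty$, with $\beta<\infty$ for every ordinal $\beta$. Game $G^\alpha_X$: in rounds $l=0,1,\dots$, I plays a block subspace $Y_l\subseteq X$ and an ordinal $\xi_l$ with $\xi_0<\alpha$ and $\xi_l<\xi_{l-1}$ for $l\ge1$; II plays a finite-dimensional subspace $F_l\subseteq Y_l$ and a nonzero $y_l\in F_0+\dots+F_l$; the game ends after II's response in the round $k$ with $\xi_k=0$ (immediately with empty outcome if $\alpha=0$); outcome $(y_0,\dots,y_k)$. ''II has a strategy to play ... satisfying P'' means II can ensure the outcome satisfies P. *)

(* Defs.v *)
From HB Require Import structures.
From mathcomp Require Import all_boot all_order all_algebra.
From mathcomp Require Import all_classical all_reals all_analysis.
Set Implicit Arguments. Unset Strict Implicit. Unset Printing Implicit Defensive.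
Import Order.TTheory GRing.Theory Num.Theory.
Import numFieldNormedType.Exports.
Local Open Scope classical_set_scope.
Local Open Scope ring_scope.

(* Every Brouwer tree denotes a countable ordinal (OL f = sup_n f n), and every
   countable ordinal (alpha < omega_1) is denoted by some tree. *)
Inductive Ord : Type :=
| OZ : Ord
| OS : Ord -> Ord
| OL : (nat -> Ord) -> Ord.

Inductive ole : Ord -> Ord -> Prop :=
| ole_zero : forall b, ole OZ b
| ole_succ : forall a b, ole a b -> ole (OS a) (OS b)
| ole_limr : forall a f n, ole a (f n) -> ole a (OL f)
| ole_liml : forall f b, (forall n, ole (f n) b) -> ole (OL f) b.

Definition olt (a b : Ord) : Prop := ole (OS a) b.
Definition ozero (a : Ord) : Prop := ole a OZ.

(* rho_ge T a s  <->  rho_T(s) >= a  (with rho_T(s) = infinity allowed),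
   by recursion on a:  rho(s) >= b+1 iff some proper extension t of s in T has
   rho(t) >= b ;  rho(s) >= sup_n f n iff rho(s) >= f n for all n. *)
Fixpoint rho_ge {A : Type} (T : seq A -> Prop) (a : Ord) (s : seq A) : Prop :=
  match a with
  | OZ => True
  | OS b => exists u : seq A, u <> [::] /\ T (s ++ u) /\ rho_ge T b (s ++ u)
  | OL f => forall n, rho_ge T (f n) s
  end.

(* rank(T) = sup {rho_T(s)+1 : s in T} > a   iff   some s in T has rho_T(s) >= a *)
Definition rank_gt {A : Type} (T : seq A -> Prop) (a : Ord) : Prop :=
  exists s, T s /\ rho_ge T a s.

Section Space.
Variables (R : realType) (V : completeNormedModType R) (e : nat -> V) (F : set R).

Definition expansion (x : V) (a : nat -> R) : Prop :=
  (fun m : nat => \sum_(n < m) a n *: e n) @ \oo --> x.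

Definition schauder_basis : Prop := forall x : V, exists! a, expansion x a.

Definition subfield_of_R : Prop :=
  F 0 /\ F 1 /\ (forall x y, F x -> F y -> F (x + y)) /\ (forall x, F x -> F (- x)) /\
  (forall x y, F x -> F y -> F (x * y)) /\ (forall x, F x -> x != 0 -> F x^-1).

Definition norm_closed : Prop :=
  forall (m : nat) (a : nat -> R), (forall n, F (a n)) ->
    F `|\sum_(n < m.+1) a n *: e n|.

Definition inW (x : V) : Prop :=
  exists (m : nat) (a : nat -> R), (forall n, F (a n)) /\ x = \sum_(n < m) a n *: e n.

Definition in_supp (x : V) (n : nat) : Prop := exists a, expansion x a /\ a n != 0.

Definition blt (x y : V) : Prop :=
  forall m n, in_supp x m -> in_supp y n -> (m < n)%N.

Definition block_seq (x : nat -> V) : Prop :=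
  forall n, inW (x n) /\ x n != 0 /\ blt (x n) (x n.+1).

Definition Fspan_inf (x : nat -> V) : set V :=
  [set v | exists (n : nat) (c : nat -> R), (forall i, F (c i)) /\
           v = \sum_(i < n) c i *: x i].

Definition block_subspace (Y : set V) : Prop :=
  exists x, block_seq x /\ Y = Fspan_inf x.

Definition Fspan (s : seq V) : set V :=
  [set v | exists c : nat -> R, (forall i, F (c i)) /\
           v = \sum_(i < size s) c i *: nth 0 s i].

Definition fd_subspace (G : set V) : Prop :=
  exists s : seq V, (forall i, (i < size s)%N -> inW (nth 0 s i)) /\ G = Fspan s.

Definition sum_sp (Gs : seq (set V)) : set V :=
  [set v | exists vs : nat -> V, (forall j, (j < size Gs)%N -> nth set0 Gs j (vs j)) /\
           v = \sum_(j < size Gs) vs j].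

Definition seq_equiv (K : R) (ys : seq V) (z : nat -> V) : Prop :=
  forall a : nat -> R,
    K^-1 * `|\sum_(i < size ys) a i *: nth 0 ys i| <= `|\sum_(i < size ys) a i *: z i| /\
    `|\sum_(i < size ys) a i *: z i| <= K * `|\sum_(i < size ys) a i *: nth 0 ys i|.

Definition Ttree (z : nat -> V) (Y : set V) (K : R) : seq V -> Prop :=
  fun s => (forall i, (i < size s)%N -> Y (nth 0 s i)) /\ seq_equiv K s z.

Definition Imove := (set V * Ord)%type.
Definition Imove0 : Imove := (set0, OZ).

(* h = ((Y_0,xi_0),...,(Y_l,xi_l)) is a legal (partial) sequence of moves of I,
   the game not having ended before round l *)
Definition legal_I (X : set V) (alpha : Ord) (h : seq Imove) : Prop :=
  forall j, (j < size h)%N ->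
    let m := nth Imove0 h j in
    [/\ block_subspace m.1, m.1 `<=` X,
        (j = 0%N -> olt m.2 alpha),
        ((0 < j)%N -> olt m.2 (nth Imove0 h j.-1).2) &
        ((j.+1 < size h)%N -> ~ ozero m.2)].

(* II has a strategy in G^alpha_X to play an outcome satisfying P.
   A strategy maps the moves of I so far to II's answer (F_l, y_l). *)
Definition II_has_strategy (X : set V) (alpha : Ord) (P : seq V -> Prop) : Prop :=
  exists sigma : seq Imove -> (set V * V),
    forall h : seq Imove, legal_I X alpha h -> (0 < size h)%N ->
      let l := (size h).-1 in
      let resp j := sigma (take j.+1 h) in
      [/\ fd_subspace (sigma h).1,
          (sigma h).1 `<=` (nth Imove0 h l).1,
          (sigma h).2 != 0 &
          sum_sp [seq (resp j).1 | j <- iota 0 (size h)] (sigma h).2] /\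
      (ozero (nth Imove0 h l).2 ->
         P [seq (resp j).2 | j <- iota 0 (size h)]).

End Space.

(* Main.v *)
Require Import Defs.
From HB Require Import structures.
From mathcomp Require Import all_boot all_order all_algebra.
From mathcomp Require Import all_classical all_reals all_analysis.
From Stdlib Require Import Classical.
Import Order.TTheory GRing.Theory Num.Theory.
Import numFieldNormedType.Exports.
Local Open Scope classical_set_scope.
Local Open Scope ring_scope.
Set Implicit Arguments. Unset Strict Implicit.

Lemma ole_refl a : ole a a.
Proof.
elim: a => [|a IH|f IH]; first exact: ole_zero.
  exact: ole_succ.
apply: ole_liml => n; apply: (@ole_limr _ f n); exact: IH.
Qed.

Lemma ole_L f n c : ole (OL f) c -> ole (f n) c.
Proof.
move=> h; remember (OL f) as o eqn:Ho; move: Ho; elim: h => //.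
- move=> a g m _ IH Ha; apply: (@ole_limr _ g m); exact: IH.
- by move=> g b H _ [<-].
Qed.

Lemma olt_nz a b : ole (OS a) b -> ~ ozero b.
Proof.
move=> h hb; rewrite /ozero in hb; move: h.
remember OZ as o eqn:Ho; move: Ho; elim: hb => //.
- by move=> b0 _ h; inversion h.
- move=> g b0 H IH Hb h; inversion h; subst.
  exact: (IH n erefl).
Qed.

Lemma nz_olt b : ~ ozero b -> olt OZ b.
Proof.
rewrite /ozero /olt; elim: b => [|b _|f IH] h.
- by exfalso; apply: h; apply: ole_zero.
- apply: ole_succ; exact: ole_zero.
- have [n hn] : exists n, ~ ole (f n) OZ.
    apply: NNPP => hc; apply: h; apply: ole_liml => n.
    by apply: NNPP => hn; apply: hc; exists n.
  apply: (@ole_limr _ f n); exact: IH.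
Qed.

Section Main.
Variables (R : realType) (V : completeNormedModType R) (e : nat -> V) (F : set R).
Hypothesis hF : subfield_of_R F.
Variables (alpha : Ord) (K : R) (X Y : set V) (z : nat -> V).
Hypothesis hYb : block_subspace e F Y.
Hypothesis hYX : Y `<=` X.

Lemma Y0 : Y 0.
Proof.
case: hYb => x [_ ->]; exists 0%N, (fun _ => 0); split; last by rewrite big_ord0.
by case: hF.
Qed.

Lemma Yadd u v : Y u -> Y v -> Y (u + v).
Proof.
case: hYb => x [_ ->].
have [F0 [_ [FD _]]] := hF.
have wid : forall (n m : nat) (c : nat -> R), (n <= m)%N ->
  \sum_(i < n) c i *: x i = \sum_(i < m) (if (i < n)%N then c i else 0) *: x i.
  move=> n m c nm; rewrite (big_ord_widen m (fun i => c i *: x i)) // big_mkcond.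
  by apply: eq_bigr => i _; case: ifP; rewrite ?scale0r.
move=> [n1 [c1 [Fc1 ->]]] [n2 [c2 [Fc2 ->]]].
exists (n1 + n2)%N, (fun i => (if (i < n1)%N then c1 i else 0) + (if (i < n2)%N then c2 i else 0)).
split.
  by move=> i; apply: FD; case: ifP.
rewrite (wid n1 (n1 + n2)%N) ?leq_addr // (wid n2 (n1 + n2)%N) ?leq_addl //.
by rewrite -big_split /=; apply: eq_bigr => i _; rewrite scalerDl.
Qed.

Lemma sum_in_Y (Gs : seq (set V)) v : sum_sp Gs v ->
  (forall j, (j < size Gs)%N -> nth set0 Gs j `<=` Y) -> Y v.
Proof.
move=> [vs [hvs ->]] hG.
apply: (big_ind Y Y0 Yadd) => i _.
exact: (hG _ (ltn_ord i) _ (hvs _ (ltn_ord i))).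
Qed.

Lemma equiv_rcons s y : seq_equiv K (rcons s y) z -> seq_equiv K s z.
Proof.
move=> h a.
have [h1 h2] := h (fun i => if (i < size s)%N then a i else 0).
rewrite size_rcons !big_ord_recr /= ltnn !scale0r !addr0 in h1 h2.
have E1 : \sum_(i < size s) (if (i < size s)%N then a i else 0) *: nth 0 (rcons s y) i
   = \sum_(i < size s) a i *: nth 0 s i.
  by apply: eq_bigr => i _; rewrite ltn_ord nth_rcons ltn_ord.
have E2 : \sum_(i < size s) (if (i < size s)%N then a i else 0) *: z i
   = \sum_(i < size s) a i *: z i.
  by apply: eq_bigr => i _; rewrite ltn_ord.
by rewrite E1 E2 in h1 h2.
Qed.


Local Notation Im := (Imove (R:=R) V).
Local Notation I0 := (Imove0 (R:=R) V).
Variable sigma : seq Im -> (set V * V).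
Hypothesis hsig : forall h : seq Im, legal_I e F X alpha h -> (0 < size h)%N ->
      let l := (size h).-1 in
      let resp j := sigma (take j.+1 h) in
      [/\ fd_subspace e F (sigma h).1,
          (sigma h).1 `<=` (nth I0 h l).1,
          (sigma h).2 != 0 &
          sum_sp [seq (resp j).1 | j <- iota 0 (size h)] (sigma h).2] /\
      (ozero (nth I0 h l).2 ->
         (fun ys => seq_equiv K ys z) [seq (resp j).2 | j <- iota 0 (size h)]).

Definition out (h : seq Im) := [seq (sigma (take j.+1 h)).2 | j <- iota 0 (size h)].
Definition allY (h : seq Im) := forall j, (j < size h)%N -> (nth I0 h j).1 = Y.
Definition cur (h : seq Im) :=
  if (size h == 0)%N then alpha else (nth I0 h (size h).-1).2.

Lemma legal_take h n : legal_I e F X alpha h -> legal_I e F X alpha (take n h).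
Proof.
move=> hl j; rewrite size_take_min => hj.
have hjh : (j < size h)%N by apply: (leq_trans hj); apply: geq_minr.
have hjn : (j < n)%N by apply: (leq_trans hj); apply: geq_minl.
have := hl j hjh; rewrite /= nth_take //; case=> h1 h2 h3 h4 h5; split => //.
- rewrite nth_take //; last by apply: leq_ltn_trans hjn; apply: leq_pred.
- move=> hj1; apply: h5; apply: (leq_trans hj1); apply: geq_minr.
Qed.

Lemma allY_take h n : allY h -> allY (take n h).
Proof.
move=> hy j; rewrite size_take_min => hj.
rewrite nth_take; first apply: hy.
  by apply: (leq_trans hj); apply: geq_minr.
by apply: (leq_trans hj); apply: geq_minl.
Qed.

Lemma out_rcons h m : out (rcons h m) = rcons (out h) (sigma (rcons h m)).2.
Proof.
rewrite /out size_rcons -addn1 iotaD add0n map_cat /= cats1.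
rewrite take_oversize ?size_rcons ?addn1 //; congr rcons.
apply/eq_in_map => j; rewrite mem_iota add0n => /andP[_ hj].
by rewrite -cats1 takel_cat.
Qed.

Lemma legal_rcons h c : legal_I e F X alpha h ->
  ole (OS c) (cur h) -> legal_I e F X alpha (rcons h (Y, c)).
Proof.
move=> hl hc j; rewrite size_rcons ltnS => hj.
rewrite /= !nth_rcons.
have [hjs|hjs] := ltnP j (size h).
- have := hl j hjs; rewrite /=; case=> h1 h2 h3 h4 h5; split => //.
  + move=> hj0; have -> : (j.-1 < size h)%N by apply: leq_ltn_trans hjs; apply: leq_pred.
    exact: h4.
  + move=> hj1; have [hj1'|] := ltnP j.+1 (size h); first exact: h5.
    move=> hsz; have E : size h = j.+1 by apply/eqP; rewrite eqn_leq hsz hjs.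
    have Ej : j = (size h).-1 by rewrite E.
    move=> hz; have HH := olt_nz hc; apply: HH; rewrite /cur.
    have -> : (size h == 0)%N = false by rewrite E.
    by rewrite -Ej.
- have Ej : j = size h by apply/eqP; rewrite eqn_leq hj hjs.
  subst j; rewrite ltnn eqxx; split => /=.
  + by case: hYb.
  + exact: hYX.
  + by move=> hs; move: hc; rewrite /cur hs eqxx.
  + move=> hs; have -> : ((size h).-1 < size h)%N by rewrite prednK.
    by move: hc; rewrite /cur -[size h]prednK //.
  + by [].
Qed.

Lemma out_in_Y h : legal_I e F X alpha h -> allY h ->
  forall i, (i < size (out h))%N -> Y (nth 0 (out h) i).
Proof.
move=> hl hy i; rewrite /out size_map size_iota => hi.
rewrite (nth_map 0%N) ?size_iota // nth_iota // add0n.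
have hH := legal_take (n:=i.+1) hl.
have hsH : size (take i.+1 h) = i.+1 by rewrite size_takel.
have hp : (0 < size (take i.+1 h))%N by rewrite hsH.
have [[_ _ _ hsum] _] := hsig hH hp.
apply: (sum_in_Y hsum) => j; rewrite size_map size_iota => hj.
rewrite (nth_map 0%N) ?size_iota // nth_iota // add0n.
have hH' := legal_take (n:=j.+1) hH.
have hs' : size (take j.+1 (take i.+1 h)) = j.+1 by rewrite size_takel.
have hp' : (0 < size (take j.+1 (take i.+1 h)))%N by rewrite hs'.
have [[_ hsub _ _] _] := hsig hH' hp'.
move: hsub; rewrite hs' /=.
by rewrite (allY_take (n:=j.+1) (allY_take (n:=i.+1) hy)) // hs'.
Qed.

Lemma out_equiv h : legal_I e F X alpha h -> allY h -> (0 < size h)%N ->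
  seq_equiv K (out h) z.
Proof.
move=> hl hy hs.
case: (classic (ozero (nth I0 h (size h).-1).2)) => hz.
  have [_ hP] := hsig hl hs; exact: hP hz.
have hl' : legal_I e F X alpha (rcons h (Y, OZ)).
  apply: legal_rcons => //; rewrite /cur.
  have -> : (size h == 0)%N = false by case: (size h) hs.
  exact: nz_olt hz.
have hs' : (0 < size (rcons h (Y, OZ)))%N by rewrite size_rcons.
have [_ hP] := hsig hl' hs'.
have HP : seq_equiv K (out (rcons h (Y, OZ))) z.
  apply: hP; rewrite size_rcons /= nth_rcons ltnn eqxx; exact: ole_zero.
by move: HP; rewrite out_rcons; apply: equiv_rcons.
Qed.

Lemma claim b : forall h, legal_I e F X alpha h -> allY h -> ole b (cur h) ->
  rho_ge (Ttree z Y K) b (out h).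
Proof.
elim: b => [|c IH|f IH] h hl hy hb /=.
- done.
- have hl' := legal_rcons hl hb.
  have hy' : allY (rcons h (Y, c)).
    move=> j hj; rewrite nth_rcons; case: ltnP => hj'; first exact: hy.
    rewrite size_rcons ltnS in hj.
    by have -> : j == size h by rewrite eqn_leq hj hj'.
  exists [:: (sigma (rcons h (Y, c))).2]; split => //.
  rewrite cats1 -out_rcons; split.
  + split; first exact: out_in_Y.
    by apply: out_equiv; rewrite ?size_rcons.
  + apply: IH => //; rewrite /cur size_rcons /= nth_rcons ltnn eqxx.
    exact: ole_refl.
- move=> n; apply: IH => //; exact: ole_L hb.
Qed.

End Main.

Theorem lemma4p8 (R : realType) (V : completeNormedModType R) (e : nat -> V)
  (F : set R)
  (he : schauder_basis e) (hFc : countable F) (hF : subfield_of_R F)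
  (hnorm : norm_closed e F)
  (alpha : Ord) (K : R) (hK : 1 <= K) (X : set V)
  (hX : block_subspace e F X) (z : nat -> V) (hz : block_seq e F z) :
  II_has_strategy e F X alpha (fun ys => seq_equiv K ys z) ->
  forall Y : set V, block_subspace e F Y -> Y `<=` X ->
    rank_gt (Ttree z Y K) alpha.
Proof.
move=> [sigma hsig] Y hYb hYX.
exists [::]; split.
  split; first by move=> i.
  move=> a; rewrite /= !big_ord0 normr0 !mulr0; by split.
change (rho_ge (Ttree z Y K) alpha (out sigma [::])).
apply: (@claim R V e F hF alpha K X Y z hYb hYX sigma hsig alpha [::]).
- by move=> j.
- by move=> j.
- exact: ole_refl.
Qed.
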